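(* Let $E$ be a real Hilbert space and define the relation $\preceq$ on $E$ by $x\preceq y\iff (x,x)\le (x,y)$. Then $(E,\preceq)$ is a cc sponge with a least element.
   Context: An orientation is a reflexive, antisymmetric binary relation. For $P\subseteq E$, $P$ is right-bounded if some $s$ has $p\preceq s$ for all $p\in P$; the join of $P$ is an $x$ with $p\preceq x$ for all $p\in P$ and $x\preceq y$ whenever $p\preceq y$ for all $p\in P$. An oriented set is a cc sponge if every nonempty right-bounded subset has a join. A least element is an element $z$ with $z\preceq x$ for all $x\in E$. *)

(* Defs.v *)
From HB Require Import structures.
From mathcomp Require Import all_boot all_order all_algebra.
From mathcomp Require Import all_classical all_reals all_analysis.
Set Implicit Arguments. Unset Strict Implicit. Unset Printing Implicit Defensive.
Import Order.TTheory GRing.Theory Num.Theory.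
Import numFieldNormedType.Exports.
Local Open Scope classical_set_scope.
Local Open Scope ring_scope.

Section Orient.
Variable T : Type.
Variable le : T -> T -> Prop.

Definition orientation : Prop :=
  (forall x, le x x) /\ (forall x y, le x y -> le y x -> x = y).

Definition right_bounded (P : set T) : Prop :=
  exists s, forall p, P p -> le p s.

Definition is_join (P : set T) (x : T) : Prop :=
  (forall p, P p -> le p x) /\
  (forall y, (forall p, P p -> le p y) -> le x y).

Definition cc_sponge : Prop :=
  orientation /\
  forall P : set T, P !=set0 -> right_bounded P -> exists x, is_join P x.

Definition least_element (z : T) : Prop := forall x, le z x.
End Orient.

(* A real Hilbert space: a complete normed space E over the reals R together
   with a symmetric bilinear form ip whose associated quadratic form gives the
   square of the norm (so the norm is induced by ip, and ip is positive
   definite). *)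
Definition is_hilbert_inner_product (R : realType) (E : completeNormedModType R)
  (ip : E -> E -> R) : Prop :=
  [/\ (forall x y, ip x y = ip y x),
      (forall x y z, ip (x + y) z = ip x z + ip y z),
      (forall (a : R) x y, ip (a *: x) y = a * ip x y) &
      (forall x, ip x x = `|x| ^+ 2)].

Definition hilbert_rel (R : realType) (E : Type) (ip : E -> E -> R) (x y : E) : Prop :=
  ip x x <= ip x y.

(* Main.v *)
Require Import Defs.
From HB Require Import structures.
From mathcomp Require Import all_boot all_order all_algebra.
From mathcomp Require Import all_classical all_reals all_analysis.
From mathcomp Require Import ring lra.
Import Order.TTheory GRing.Theory Num.Theory.
Import numFieldNormedType.Exports.
Local Open Scope classical_set_scope.
Local Open Scope ring_scope.

Lemma ip_lin {R : realType} {E : completeNormedModType R}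
  {ip : E -> E -> R} (Hip : is_hilbert_inner_product ip) (s t : R) (a b : E) :
  ip (s *: a + t *: b) (s *: a + t *: b) = s ^+ 2 * ip a a + 2 * s * t * ip a b + t ^+ 2 * ip b b.
Proof.
case: Hip => HC HD HZ _.
have HDr : forall x y z, ip x (y + z) = ip x y + ip x z.
  by move=> x y z; rewrite HC HD -!(HC x).
have HZr : forall c x y, ip x (c *: y) = c * ip x y.
  by move=> c x y; rewrite HC HZ -(HC x).
rewrite HD !HDr !HZ !HZr (HC b a); ring.
Qed.

Lemma ip_norm {R : realType} {E : completeNormedModType R}
  {ip : E -> E -> R} (Hip : is_hilbert_inner_product ip) (a b : E) :
  ip a b <= `|a| * `|b|.
Proof.
have Hq := Hip; case: Hq => HC HD HZ HN.
have := ip_lin Hip `|b| (- `|a|) a b.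
have h0 := HN (`|b| *: a + - `|a| *: b).
have hq : 0 <= ip (`|b| *: a + - `|a| *: b) (`|b| *: a + - `|a| *: b).
  by rewrite h0 exprn_ge0.
move=> e; rewrite e !HN in hq.
have [ha|ha] := eqVneq `|a| 0.
  have -> : a = 0 by apply/eqP; rewrite -normr_eq0 ha.
  rewrite normr0 mul0r.
  by have := HZ 0 0 b; rewrite scale0r mul0r => ->.
have [hb|hb] := eqVneq `|b| 0.
  have -> : b = 0 by apply/eqP; rewrite -normr_eq0 hb.
  rewrite normr0 mulr0 HC.
  by have := HZ 0 0 a; rewrite scale0r mul0r => ->.
have pa : 0 < `|a| by rewrite lt_def ha normr_ge0.
have pb : 0 < `|b| by rewrite lt_def hb normr_ge0.
have pab : 0 < `|a| * `|b| by rewrite mulr_gt0.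
nra.
Qed.

Lemma ip0l {R : realType} {E : completeNormedModType R}
  {ip : E -> E -> R} (Hip : is_hilbert_inner_product ip) (b : E) : ip 0 b = 0.
Proof. by case: Hip => _ _ HZ _; have := HZ 0 0 b; rewrite scale0r mul0r. Qed.

Lemma ipDr {R : realType} {E : completeNormedModType R}
  {ip : E -> E -> R} (Hip : is_hilbert_inner_product ip) (x y z : E) :
  ip x (y + z) = ip x y + ip x z.
Proof. by case: Hip => HC HD _ _; rewrite HC HD -!(HC x). Qed.

Lemma ipNr {R : realType} {E : completeNormedModType R}
  {ip : E -> E -> R} (Hip : is_hilbert_inner_product ip) (x y : E) :
  ip x (- y) = - ip x y.
Proof.
by case: Hip => HC _ HZ _; rewrite HC -scaleN1r HZ HC mulN1r.
Qed.

Lemma ipZr {R : realType} {E : completeNormedModType R}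
  {ip : E -> E -> R} (Hip : is_hilbert_inner_product ip) (c : R) (x y : E) :
  ip x (c *: y) = c * ip x y.
Proof. by case: Hip => HC _ HZ _; rewrite HC HZ HC. Qed.

Lemma ipNl {R : realType} {E : completeNormedModType R}
  {ip : E -> E -> R} (Hip : is_hilbert_inner_product ip) (x y : E) :
  ip (- x) y = - ip x y.
Proof.
by case: Hip => HC _ HZ _; rewrite -scaleN1r HZ mulN1r.
Qed.

Lemma ip_ge0 {R : realType} {E : completeNormedModType R}
  {ip : E -> E -> R} (Hip : is_hilbert_inner_product ip) (x : E) :
  0 <= ip x x.
Proof. by case: Hip => _ _ _ ->; rewrite exprn_ge0. Qed.

Lemma ip_eq0 {R : realType} {E : completeNormedModType R}
  {ip : E -> E -> R} (Hip : is_hilbert_inner_product ip) (x : E) :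
  ip x x <= 0 -> x = 0.
Proof.
case: Hip => _ _ _ ->; move=> h.
have h2 : `|x| ^+ 2 = 0 by apply/eqP; rewrite eq_le h exprn_ge0.
by apply/eqP; rewrite -normr_eq0; move/eqP: h2; rewrite expf_eq0.
Qed.

Theorem mainTheorem7 (R : realType) (E : completeNormedModType R)
  (ip : E -> E -> R) (Hip : is_hilbert_inner_product ip) :
  cc_sponge (hilbert_rel ip) /\ exists z : E, least_element (hilbert_rel ip) z.
Proof.
have Hq := Hip; case: Hq => HC HD HZ HN.
split; last first.
  by exists 0 => x; rewrite /hilbert_rel !ip0l.
split.
  split=> [x|x y]; rewrite /hilbert_rel //.
  move=> h1 h2; apply/eqP; rewrite -subr_eq0; apply/eqP; apply: (ip_eq0 Hip).
  have := ip_lin Hip 1 (-1) x y; rewrite scale1r scaleN1r => ->.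
  rewrite (HC y x) in h2; lra.
move=> P [p0 Pp0] [s Hs].
pose U := fun y => forall p, P p -> ip p p <= ip p y.
have Us : U s by [].
have Uconv : forall a b t, U a -> U b -> 0 <= t <= 1 -> U (a + t *: (b - a)).
  move=> a b t Ua Ub /andP[t0 t1] p Pp.
  rewrite ipDr // ipZr // ipDr // ipNr //.
  have := Ua p Pp; have := Ub p Pp; nra.
pose S := [set r | exists2 y, U y & r = ip y y].
have hS : has_inf S.
  split; first by exists (ip s s); exists s.
  by exists 0 => r [y _ ->]; apply: ip_ge0.
pose d := inf S.
have dle : forall y, U y -> d <= ip y y.
  by move=> y Uy; apply: ge_inf; [case: hS | exists y].
have hy : forall n : nat, exists y, U y /\ ip y y < d + n.+1%:R^-1.
  move=> n; have [e [y Uy ->] he] := @inf_adherent _ S (n.+1%:R^-1) ltac:(by []) hS.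
  by exists y.
have [y Hy] := choice hy.
have mid : forall m n, ip (y n - y m) (y n - y m) <= 2 * m.+1%:R^-1 + 2 * n.+1%:R^-1.
  move=> m n.
  have hmid := dle _ (Uconv (y m) (y n) (2^-1) (Hy m).1 (Hy n).1 ltac:(apply/andP; split; lra)).
  have e1 := ip_lin Hip 1 (2^-1) (y m) (y n - y m); rewrite scale1r in e1.
  have e2 := ip_lin Hip 1 (-1) (y n) (y m); rewrite scale1r scaleN1r in e2.
  rewrite e1 in hmid; rewrite e2.
  rewrite ipDr // ipNr // in hmid.
  have := ip_lin Hip 1 (-1) (y n) (y m); rewrite scale1r scaleN1r => e3.
  rewrite e3 (HC (y m) (y n)) in hmid.
  have := (Hy m).2; have := (Hy n).2.
  move: (m.+1%:R^-1) (n.+1%:R^-1) hmid => a b hmid h1 h2; lra.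
have cy : cvg (y @ \oo).
  apply: cauchy_cvg; apply: cauchy_exP => eps he.
  have he4 : 0 < eps ^+ 2 / 4 by rewrite divr_gt0 // exprn_gt0.
  have [N hN] := filter_ex (near_infty_natSinv_lt (PosNum he4)).
  exists (y N); apply: filterS (nbhs_infty_ge N) => n hn.
  rewrite -ball_normE /ball_ /= distrC.
  have := mid N n; rewrite HN.
  have hnN : n.+1%:R^-1 <= N.+1%:R^-1 :> R.
    by rewrite lef_pV2 ?posrE ?ltr0Sn // ler_nat ltnS.
  have hN' : N.+1%:R^-1 < eps ^+ 2 / 4 := hN.
  move: (N.+1%:R^-1) (n.+1%:R^-1) hnN hN' => a b hab ha h.
  have h0 := normr_ge0 (y n - y N).
  nra.
set x := lim (y @ \oo).
have Hx : y @ \oo --> x := cy.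
have Ux : U x.
  move=> p Pp; apply/ler_addgt0Pr => e he.
  have hp1 : 0 < `|p| + 1 by rewrite ltr_wpDl.
  have he' : 0 < e / (`|p| + 1) by rewrite divr_gt0.
  have [n hn] := filter_ex (proj1 (cvgrPdist_lt _ _) Hx _ he').
  have hn' : (`|p| + 1) * `|x - y n| < e.
    by rewrite mulrC -ltr_pdivlMr.
  have ex : ip p x = ip p (y n) + ip p (x - y n).
    by rewrite -ipDr // addrC subrK.
  have hcs := ip_norm Hip (- p) (x - y n).
  rewrite ipNl // normrN in hcs.
  have h1 := (Hy n).1 p Pp.
  have h0 := normr_ge0 (x - y n).
  have h0' := normr_ge0 p.
  rewrite ex; nra.
have qx : ip x x <= d.
  apply/ler_addgt0Pr => e he.
  have c2 : (fun n => `|y n| * `|y n|) @ \oo --> `|x| * `|x|.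
    by apply: cvgM; apply: cvg_norm; exact: Hx.
  rewrite HN expr2 -(cvg_lim (@Rhausdorff R) c2).
  apply: limr_le; first by apply: cvgP c2.
  apply: filterS (near_infty_natSinv_lt (PosNum he)) => n hn.
  have := (Hy n).2; rewrite HN expr2 /=.
  have hn2 : n.+1%:R^-1 < e := hn.
  move: (n.+1%:R^-1) hn2 => a ha hh; lra.
exists x; split.
  by move=> p Pp; apply: Ux.
move=> z Hz; rewrite /hilbert_rel leNgt; apply/negP => hlt.
have Uz : U z := Hz.
pose a := ip x z - ip x x.
pose b := ip (z - x) (z - x).
have ha : a < 0 by rewrite /a subr_lt0.
have hb : 0 <= b by apply: ip_ge0.
have hba : 0 < b - a by lra.
pose t := - a / (b - a).
have ht0 : 0 < t by rewrite /t divr_gt0 // oppr_gt0.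
have ht : t * (b - a) = - a by rewrite /t divfK // gt_eqF.
have ht1 : t <= 1 by rewrite /t ler_pdivrMr // mul1r; lra.
have hd := dle _ (Uconv x z t Ux Uz ltac:(apply/andP; split; lra)).
have e1 := ip_lin Hip 1 t x (z - x); rewrite scale1r in e1.
rewrite e1 ipDr // ipNr // in hd.
have hneg : t * a * (1 + t) < 0.
  have h1 : 0 < - a * (1 + t) by apply: mulr_gt0; lra.
  have h2 := mulr_gt0 ht0 h1.
  have -> : t * a * (1 + t) = - (t * (- a * (1 + t))) by ring.
  by rewrite oppr_lt0.
have e2 : t ^+ 2 * b = t * (t * a - a) by rewrite expr2 -mulrA; congr (_ * _); lra.
rewrite -/b in hd e2.
have : 2 * 1 * t * (ip x z - ip x x) + t ^+ 2 * b = t * a * (1 + t).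
  rewrite e2 /a; ring.
lra.
Qed.
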